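(* In a combinatorial auction with a non-decreasing payment rule where all bidders play piecewise constant strategies, for every bidder $i$ and every valuation $v_i$ there exists a cell vertex $b_i^*$ of bidder $i$'s action space such that for every bid $b_i\in\mathbb{R}_{\ge0}^r$, $$\bar u^{\mathrm{OPT}}_i(v_i,b_i^* )\ge \bar u^{\mathrm{OPT}}_i(v_i,b_i).$$
   Context: A combinatorial auction sells goods $M$ to bidders $N$. Each bidder $i$ bids $b_i\in\mathbb{R}_{\ge0}^r$ on his $r$ bundles of interest (other bundles bid $0$) and has valuation $v_i$ with $v_i(K)\ge0$ and free disposal ($K\subseteq K'\Rightarrow v_i(K)\le v_i(K')$). An allocation $x$ gives each bidder one bundle $x_i$ (bundle of interest or $\emptyset$), pairwise disjoint; $X(b)$ is the set of allocations maximizing $\sum_i b_i(x_i)$, one chosen uniformly at random. A payment rule gives $p_i(b,x)\le b_i(x_i)$; utility is $v_i(x_i)-p_i(b,x)$. The rule is non-decreasing if for every $x$, every $i$ and all $b,b'$ with $x\in X(b)\cap X(b')$, $b_{-i}=b'_{-i}$, $b_i'\ge b_i$ coordinatewise, $p_i(b',x)\ge p_i(b,x)$. Valuations $V_j$ are independent random variables; strategies $s_j$ map valuations to bids and are piecewise constant (finitely many values), so $b_{-i}=s_{-i}(V_{-i})$ has finite support. Let $\Pi$ be the set of vectors in $\mathbb{R}^r$ whose coordinates are a permutation of $(1,\dots,r)$. For $\delta>0$, $\bar u^\delta_i(v_i,b_i,\pi)=\mathbb{E}_{b_{-i}}\big[\mathbb{E}_{x\in X(b_i+\delta\pi,b_{-i})}[v_i(x_i)-p_i(b,x)]\big]$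 with $b=(b_i,b_{-i})$ (inner expectation uniform), and $\bar u^{\mathrm{OPT}}_i(v_i,b_i)=\max_{\pi\in\Pi}\lim_{\delta\to0}\bar u^\delta_i(v_i,b_i,\pi)$. A cell of bidder $i$'s action space is a connected region $S\subseteq\mathbb{R}_{\ge0}^r$ such that for every $b_{-i}$ with positive probability there exists an allocation $x$ with $x\in X(b_i,b_{-i})$ for all $b_i\in S$; cells are convex polytopes and cell vertices are their vertices. *)

(* Defs.v *)
From HB Require Import structures.
From mathcomp Require Import all_boot all_order all_algebra all_fingroup.
From mathcomp Require Import all_classical all_reals all_analysis.
Set Implicit Arguments. Unset Strict Implicit. Unset Printing Implicit Defensive.
Import Order.TTheory GRing.Theory Num.Theory.
Import numFieldNormedType.Exports.
Local Open Scope classical_set_scope.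
Local Open Scope ring_scope.

Section Auction.
Variables (R : realType) (M : finType) (n r : nat).
(* bnd j k = the k-th bundle of interest of bidder j *)
Variable bnd : 'I_n -> 'I_r -> {set M}.

(* An allocation gives each bidder one of its bundles of interest (Some k)
   or the empty bundle (None). *)
Definition alloc := {ffun 'I_n -> option 'I_r}.

Definition bset (j : 'I_n) (o : option 'I_r) : {set M} :=
  if o is Some k then bnd j k else finset.set0.

Definition feasible (x : alloc) : bool :=
  [forall j, forall k, (j != k) ==> [disjoint bset j (x j) & bset k (x k)]].

Definition bid := 'rV[R]_r.
Definition profile := 'I_n -> bid.

Definition bid_nonneg (bi : bid) : Prop := forall k, 0 <= bi 0 k.
Definition profile_nonneg (b : profile) : Prop := forall j, bid_nonneg (b j).

Definition bidval (bi : bid) (o : option 'I_r) : R :=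
  if o is Some k then bi 0 k else 0.

Definition welfare (b : profile) (x : alloc) : R :=
  \sum_(j < n) bidval (b j) (x j).

Definition Xopt (b : profile) : {set alloc} :=
  [set x | feasible x &&
     [forall y : alloc, feasible y ==> (welfare b y <= welfare b x)]].

Variable p : 'I_n -> profile -> alloc -> R.

Definition payment_le_bid : Prop :=
  forall i b x, profile_nonneg b -> x \in Xopt b -> p i b x <= bidval (b i) (x i).

Definition nondecreasing_payment : Prop :=
  forall (x : alloc) (i : 'I_n) (b b' : profile),
    profile_nonneg b -> profile_nonneg b' ->
    x \in Xopt b -> x \in Xopt b' ->
    (forall j, j != i -> b j = b' j) ->
    (forall k, b i 0 k <= b' i 0 k) ->
    p i b x <= p i b' x.

Definition valuation (v : {set M} -> R) : Prop :=
  (forall K : {set M}, 0 <= v K) /\ (forall K K' : {set M}, K \subset K' -> v K <= v K').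

(* Distribution of the other bidders' bids induced by piecewise constant
   strategies: bidder j independently bids B j k with probability w j k,
   k ranging over a finite index set 'I_m.+1 (finite support). *)
Variable m : nat.
Variable w : 'I_n -> 'I_m.+1 -> R.
Variable B : 'I_n -> 'I_m.+1 -> bid.

Definition bid_distributions : Prop :=
  (forall j k, 0 <= w j k) /\ (forall j, \sum_(k < m.+1) w j k = 1) /\
  (forall j k, bid_nonneg (B j k)).

Variable i : 'I_n.

(* an outcome index c selects a support point for every bidder j <> i
   (c i is normalized to ord0 and irrelevant) *)
Definition prof (bi : bid) (c : {ffun 'I_n -> 'I_m.+1}) : profile :=
  fun j => if j == i then bi else B j (c j).

Definition prob (c : {ffun 'I_n -> 'I_m.+1}) : R :=
  \prod_(j < n | j != i) w j (c j).

Definition Ebid (f : {ffun 'I_n -> 'I_m.+1} -> R) : R :=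
  \sum_(c : {ffun 'I_n -> 'I_m.+1} | c i == ord0) prob c * f c.

Definition pivec (s : {perm 'I_r}) : bid := \row_k ((s k)%:R + 1).

Definition udelta (v : {set M} -> R) (bi pi : bid) (delta : R) : R :=
  Ebid (fun c =>
    let b := prof bi c in
    let bd := prof (bi + delta *: pi) c in
    (#|Xopt bd|%:R)^-1 *
      \sum_(x in Xopt bd) (v (bset i (x i)) - p i b x)).

Definition ulim (v : {set M} -> R) (bi : bid) (s : {perm 'I_r}) : R :=
  lim (udelta v bi (pivec s) @ 0^'+).

Definition uOPT (v : {set M} -> R) (bi : bid) : R :=
  \big[Num.max/ulim v bi 1%g]_(s : {perm 'I_r}) ulim v bi s.

Definition cell_property (S : set bid) : Prop :=
  (forall bi, S bi -> bid_nonneg bi) /\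
  forall c : {ffun 'I_n -> 'I_m.+1}, c i = ord0 -> 0 < prob c ->
    exists x : alloc, forall bi, S bi -> x \in Xopt (prof bi c).

Definition is_cell (S : set bid) : Prop :=
  connected S /\ cell_property S /\
  (forall S', connected S' -> cell_property S' -> S `<=` S' -> S' = S).

Definition is_vertex (S : set bid) (b : bid) : Prop :=
  S b /\ forall y z (t : R), S y -> S z -> 0 < t < 1 ->
    b = t *: y + (1 - t) *: z -> y = z.

Definition is_cell_vertex (b : bid) : Prop :=
  exists S, is_cell S /\ is_vertex S b.

End Auction.

(* Main.v *)
Require Import Defs.
From HB Require Import structures.
From mathcomp Require Import all_boot all_order all_algebra all_fingroup.
From mathcomp Require Import all_classical all_reals all_analysis.
From mathcomp Require Import lra ring.
Import Order.TTheory GRing.Theory Num.Theory.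
Import numFieldNormedType.Exports.
Local Open Scope classical_set_scope.
Local Open Scope ring_scope.

Section Pf.
Variables (R : realType) (M : finType) (n r m : nat).
Variable bnd : 'I_n -> 'I_r -> {set M}.
Variable p : 'I_n -> profile R n r -> alloc n r -> R.
Variables (w : 'I_n -> 'I_m.+1 -> R) (B : 'I_n -> 'I_m.+1 -> bid R r).
Variable i : 'I_n.

Local Notation C := {ffun 'I_n -> 'I_m.+1}.
Local Notation al := (alloc n r).
Local Notation bidt := (bid R r).

Definition rest (c : C) (y : al) : R :=
  \sum_(j < n | j != i) bidval (B j (c j)) (y j).

Lemma welfareE (bi : bidt) c y :
  welfare (prof B i bi c) y = bidval bi (y i) + rest c y.
Proof.
rewrite /welfare (bigD1 i) //= /prof eqxx; congr (_ + _).
by apply: eq_bigr => j /negbTE ->.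
Qed.

Lemma bidvalD (a b : bidt) o : bidval (a + b) o = bidval a o + bidval b o.
Proof. by case: o => [k|] /=; rewrite ?mxE ?addr0. Qed.

Lemma bidvalZ t (a : bidt) o : bidval (t *: a) o = t * bidval a o.
Proof. by case: o => [k|] /=; rewrite ?mxE ?mulr0. Qed.

Lemma bidvalN (a : bidt) o : bidval (- a) o = - bidval a o.
Proof. by case: o => [k|] /=; rewrite ?mxE ?oppr0. Qed.

Lemma XoptP (b : profile R n r) x :
  reflect (feasible bnd x /\ forall y, feasible bnd y -> welfare b y <= welfare b x)
          (x \in Xopt bnd b).
Proof.
rewrite inE; apply: (iffP andP) => -[fx H]; split => //.
  by move=> y fy; move/forallP: H => /(_ y); rewrite fy.
by apply/forallP => y; apply/implyP => /H.
Qed.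

Definition piv (s : {perm 'I_r}) o := bidval (pivec R s) o.

Lemma pivS s k : piv s (Some k) = (s k)%:R + 1.
Proof. by rewrite /piv /= mxE. Qed.

Lemma piv_ge0 s o : 0 <= piv s o.
Proof. by case: o => [k|] //; rewrite pivS addr_ge0. Qed.

Lemma piv_inj s : injective (piv s).
Proof.
case=> [k|] [l|] //; rewrite ?pivS.
- move/addIr/eqP; rewrite eqr_nat => /eqP/val_inj/perm_inj -> //.
- by move/eqP; rewrite paddr_eq0 // oner_eq0 andbF.
- by move/esym/eqP; rewrite paddr_eq0 // oner_eq0 andbF.
Qed.

Definition lexle (b : bidt) s c (z y : al) :=
  (welfare (prof B i b c) z < welfare (prof B i b c) y) ||
  ((welfare (prof B i b c) z == welfare (prof B i b c) y) &&
   (piv s (z i) <= piv s (y i))).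

Definition Sel (b : bidt) s c : {set al} :=
  [set y | feasible bnd y && [forall z, feasible bnd z ==> lexle b s c z y]].

Lemma small_eps (x y d : R) : 0 < d ->
  \forall t \near 0^'+, t * x < d + t * y.
Proof.
move=> d0; set e := d / (`|x - y| + 1).
have e0 : 0 < e by rewrite divr_gt0 // ltr_wpDl.
near=> t.
have t0 : 0 < t by near: t; exact: nbhs_right_gt.
have te : t < e by near: t; exact: nbhs_right_lt.
have h1 := ler_wpM2l (ltW t0) (ler_norm (x - y)).
have h2 : t * `|x - y| < e * (`|x - y| + 1).
  have h4 : `|x - y| <= `|x - y| + 1 by rewrite lerDl.
  apply: (le_lt_trans (ler_wpM2l (ltW t0) h4)).
  by rewrite ltr_pM2r // ltr_wpDl.
have h3 : e * (`|x - y| + 1) = d by rewrite /e mulfVK // gt_eqF // ltr_wpDl.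
have : t * x - t * y < d by rewrite -mulrBr -h3 (le_lt_trans h1).
lra.
Unshelve. all: by end_near.
Qed.

Lemma near_lex (a b al be : R) :
  \forall t \near 0^'+, (a + t * al <= b + t * be) = ((a < b) || ((a == b) && (al <= be))).
Proof.
case: (ltgtP a b) => [ab|ba|->] /=.
- have H := small_eps al be (b - a) (ltac:(by rewrite subr_gt0)).
  near=> t; apply/idP.
  have : t * al < b - a + t * be by near: t; exact: H.
  move=> h'; apply: ltW; lra.
- have H := small_eps be al (a - b) (ltac:(by rewrite subr_gt0)).
  near=> t; apply/negbTE; rewrite -ltNge.
  have : t * be < a - b + t * al by near: t; exact: H.
  lra.
- near=> t; rewrite lerD2l /=; rewrite ?eqxx ?ltxx /=; apply: ler_pM2l.
  by near: t; exact: nbhs_right_gt.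
Unshelve. all: by end_near.
Qed.

Lemma Xopt_near (b : bidt) s c :
  \forall t \near 0^'+, Xopt bnd (prof B i (b + t *: pivec R s) c) = Sel b s c.
Proof.
have H : forall yz : al * al, \forall t \near 0^'+,
   (welfare (prof B i (b + t *: pivec R s) c) yz.2 <=
    welfare (prof B i (b + t *: pivec R s) c) yz.1) = lexle b s c yz.2 yz.1.
  move=> [y z] /=; rewrite /lexle.
  have := near_lex (welfare (prof B i b c) z) (welfare (prof B i b c) y)
     (piv s (z i)) (piv s (y i)).
  apply: filterS => t <-.
  by rewrite !welfareE !bidvalD !bidvalZ /piv (addrAC (bidval b (z i))) (addrAC (bidval b (y i))).
suff HH : \forall t \near 0^'+, forall yz : al * al,
   (welfare (prof B i (b + t *: pivec R s) c) yz.2 <=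
    welfare (prof B i (b + t *: pivec R s) c) yz.1) = lexle b s c yz.2 yz.1.
  apply: filterS HH => t Ht.
  apply/setP => y; rewrite !inE; congr (_ && _); apply: eq_forallb => z.
  by rewrite (Ht (y, z)).
exact: filter_forall _ H.
Qed.

Definition fU v (b : bidt) s (c : C) : R :=
  (#|Sel b s c|%:R)^-1 *
    \sum_(x in Sel b s c) (v (bset bnd i (x i)) - p i (prof B i b c) x).

Definition U v b s := Ebid w i (fU v b s).

Lemma ulimE v b s : ulim bnd p w B i v b s = U v b s.
Proof.
rewrite /ulim; apply: cvg_lim; first exact: Rhausdorff.
apply: cvg_near_cst.
suff HH : \forall t \near 0^'+, forall c,
   Xopt bnd (prof B i (b + t *: pivec R s) c) = Sel b s c.
  apply: filterS HH => t Ht.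
rewrite /udelta /U /Ebid; apply: eq_bigr => c _.
  by rewrite /= Ht.
exact: filter_forall _ (fun c => Xopt_near b s c).
Qed.

Lemma Xopt_nonempty (b : profile R n r) : exists x, x \in Xopt bnd b.
Proof.
pose x0 : al := [ffun _ => None].
have fx0 : feasible bnd x0.
  apply/forallP => j; apply/forallP => k; apply/implyP => _.
  by rewrite /x0 !ffunE /= -setI_eq0 finset.set0I.
case: (@arg_maxP _ _ _ x0 (feasible bnd) (welfare b) fx0) => x fx H.
by exists x; apply/XoptP; split => // y fy; exact: H.
Qed.

Lemma Sel_sub (b : bidt) s c x : x \in Sel b s c -> x \in Xopt bnd (prof B i b c).
Proof.
rewrite inE => /andP[fx /forallP H]; apply/XoptP; split => // z fz.
move: (H z); rewrite fz /= /lexle => /orP[/ltW //|/andP[/eqP -> _]] //.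
Qed.

Arguments Sel_sub {b s c x}.

Lemma Xopt_welfare (b : profile R n r) (x y : al) : x \in Xopt bnd b -> y \in Xopt bnd b ->
  welfare b x = welfare b y.
Proof.
move=> /XoptP[fx Hx] /XoptP[fy Hy].
by apply/eqP; rewrite eq_le Hy // Hx.
Qed.

Arguments Xopt_welfare {b x y}.

Lemma Sel_eq (b : bidt) s c x y : x \in Sel b s c ->
  (y \in Sel b s c) = (y \in Xopt bnd (prof B i b c)) && (y i == x i).
Proof.
move=> xS; have xO := Sel_sub xS.
apply/idP/andP => [yS|[yO /eqP yx]].
  have yO := Sel_sub yS; split => //.
  have Wxy := Xopt_welfare xO yO.
  move: xS yS; rewrite !inE => /andP[fx /forallP Hx] /andP[fy /forallP Hy].
  move: (Hx y) (Hy x); rewrite fx fy /= /lexle Wxy ltxx eqxx /= => h1 h2.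
  by apply/eqP/(piv_inj s)/eqP; rewrite eq_le h1 h2.
have Wxy := Xopt_welfare xO yO.
move: xS; rewrite !inE => /andP[fx /forallP Hx].
move/XoptP: yO => [fy _]; rewrite fy /=; apply/forallP => z.
by move: (Hx z); rewrite /lexle -Wxy yx.
Qed.

Arguments Sel_eq {b s c x} y.

Lemma Sel_intro (b : bidt) s c x : x \in Xopt bnd (prof B i b c) ->
  (forall z, z \in Xopt bnd (prof B i b c) -> piv s (z i) <= piv s (x i)) ->
  x \in Sel b s c.
Proof.
move=> xO H; have /XoptP[fx Hx] := xO.
rewrite inE fx /=; apply/forallP => z; apply/implyP => fz.
rewrite /lexle; have := Hx z fz; rewrite le_eqVlt => /orP[/eqP e|->//].
rewrite e ltxx eqxx /=; apply: H; apply/XoptP; split => // y fy.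
by rewrite e; exact: Hx.
Qed.

Lemma Sel_nonempty (b : bidt) s c : exists x, x \in Sel b s c.
Proof.
have [t Ht] := filter_ex (Xopt_near b s c).
have [x xO] := Xopt_nonempty (prof B i (b + t *: pivec R s) c).
by exists x; rewrite -Ht.
Qed.

Lemma Xopt_same (b bb : bidt) c (x y : al) : x \in Xopt bnd (prof B i b c) ->
  x \in Xopt bnd (prof B i bb c) -> y i = x i ->
  (y \in Xopt bnd (prof B i b c)) = (y \in Xopt bnd (prof B i bb c)).
Proof.
have gen : forall b1 b2, x \in Xopt bnd (prof B i b1 c) ->
    x \in Xopt bnd (prof B i b2 c) -> y i = x i ->
    y \in Xopt bnd (prof B i b1 c) -> y \in Xopt bnd (prof B i b2 c).
  move=> b1 b2 x1 x2 yx y1.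
  have /XoptP[fy _] := y1; have /XoptP[_ H2] := x2.
  have := Xopt_welfare x1 y1; rewrite !welfareE yx => /addrI e.
  apply/XoptP; split => // z fz.
  by rewrite (le_trans (H2 z fz)) // !welfareE yx e.
move=> x1 x2 yx; apply/idP/idP; [exact: gen | exact: gen].
Qed.

Lemma convex_connected (A : set bidt) a : A a ->
  (forall y z t, A y -> A z -> 0 <= t <= 1 -> A (t *: y + (1 - t) *: z)) ->
  connected A.
Proof.
move=> Aa conv.
have -> : A = \bigcup_(y in A) ((fun t : R => a + t *: (y - a)) @` `[0, 1]).
  apply/seteqP; split => [y Ay|y [z Az [t t01 <-]]].
    exists y => //; exists 1; first by rewrite /= in_itv /= ler01 lexx.
    by rewrite scale1r addrC subrK.
  have -> : a + t *: (z - a) = t *: z + (1 - t) *: a.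
    by apply/matrixP => u v; rewrite !mxE; ring.
  by apply: conv => //; move: t01; rewrite /= in_itv.
apply: bigcup_connected.
  exists a => y Ay; exists 0; first by rewrite /= in_itv /= lexx ler01.
  by rewrite scale0r addr0.
move=> y Ay; apply: connected_continuous_connected; first exact: segment_connected.
apply: continuous_subspaceT => t; apply: cvgD.
  exact: cvg_cst.
exact: scalel_continuous.
Qed.

Definition QX (X : {ffun C -> al}) : set bidt := fun b =>
  bid_nonneg b /\ forall c : C, c i = ord0 -> 0 < prob w i c ->
    X c \in Xopt bnd (prof B i b c).

Lemma welf_comb (y z : bidt) t c u :
  welfare (prof B i (t *: y + (1 - t) *: z) c) u =
  t * welfare (prof B i y c) u + (1 - t) * welfare (prof B i z c) u.
Proof. by rewrite !welfareE bidvalD !bidvalZ; ring. Qed.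

Lemma QX_conv X y z t : QX X y -> QX X z -> 0 <= t <= 1 ->
  QX X (t *: y + (1 - t) *: z).
Proof.
move=> [y0 Hy] [z0 Hz] /andP[t0 t1]; have t1' : 0 <= 1 - t by rewrite subr_ge0.
split.
  by move=> k; rewrite !mxE addr_ge0 // mulr_ge0.
move=> c ci pc; have /XoptP[fx Hy'] := Hy c ci pc; have /XoptP[_ Hz'] := Hz c ci pc.
apply/XoptP; split => // u fu; rewrite !welf_comb.
by apply: lerD; apply: ler_wpM2l => //; [exact: Hy' | exact: Hz'].
Qed.

Definition bstar (X : {ffun C -> al}) : bidt :=
  \row_k inf [set t | exists2 b, QX X b & t = b 0 k].

Lemma bstar_lb X b : QX X b -> forall k, bstar X 0 k <= b 0 k.
Proof.
move=> Qb k; rewrite mxE; apply: ge_inf; last by exists b.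
by exists 0 => t [b' [b'0 _] ->].
Qed.

Lemma bstar_ge0 X b : QX X b -> bid_nonneg (bstar X).
Proof.
move=> Qb k; rewrite mxE; apply: lb_le_inf; first by exists (b 0 k), b.
by move=> t [b' [b'0 _] ->].
Qed.

Lemma bstar_in X b0 : QX X b0 -> QX X (bstar X).
Proof.
move=> Qb0; rewrite /QX; split; first exact: (bstar_ge0 _ _ Qb0).
move=> c ci pc; have /XoptP[fx _] := Qb0.2 c ci pc.
apply/XoptP; split => // z fz; apply/ler_addgt0Pr => e e0.
have [b Qb Hb] : exists2 b, QX X b &
    bidval b (X c i) <= bidval (bstar X) (X c i) + e.
  case E : (X c i) => [k|] /=; last by exists b0; rewrite // add0r ltW.
  have hi : has_inf [set t | exists2 b, QX X b & t = b 0 k].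
    split; first by exists (b0 0 k), b0.
    by exists 0 => t [b' [b'0 _] ->].
  have [t [b Qb ->] lt] := inf_adherent e0 hi.
  by exists b => //; rewrite mxE ltW.
have /XoptP[_ Hb'] := Qb.2 c ci pc.
apply: (le_trans (y := welfare (prof B i b c) z)).
  rewrite !welfareE lerD2r; case: (z i) => [k|] //=.
  exact: bstar_lb _ _ Qb _.
apply: (le_trans (Hb' z fz)); rewrite !welfareE; lra.
Qed.

Lemma bstar_vertex X b0 : QX X b0 -> is_vertex (QX X) (bstar X).
Proof.
move=> Qb0; rewrite /QX; split; first exact: (bstar_in _ _ Qb0).
move=> y z t Qy Qz /andP[t0 t1] e; apply/matrixP => a k.
rewrite [a]ord1.
have hy := bstar_lb _ _ Qy k; have hz := bstar_lb _ _ Qz k.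
have ek : bstar X 0 k = t * y 0 k + (1 - t) * z 0 k.
  by rewrite {1}e !mxE.
have h1 : 0 <= t * (y 0 k - bstar X 0 k).
  by apply: mulr_ge0; [exact: ltW | rewrite subr_ge0].
have h2 : 0 <= (1 - t) * (z 0 k - bstar X 0 k).
  by apply: mulr_ge0; [rewrite subr_ge0; exact: ltW | rewrite subr_ge0].
have hs : t * (y 0 k - bstar X 0 k) + (1 - t) * (z 0 k - bstar X 0 k) = 0.
  rewrite ek; ring.
have : t * (y 0 k - bstar X 0 k) = 0 by lra.
move/eqP; rewrite mulf_eq0 gt_eqF //= subr_eq0 => /eqP ey.
have : (1 - t) * (z 0 k - bstar X 0 k) = 0 by lra.
move/eqP; rewrite mulf_eq0 subr_eq0 (gt_eqF t1) /= subr_eq0 => /eqP ez.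
by rewrite ey ez.
Qed.

Definition isSel (X : {ffun C -> al}) (bi : bidt) s :=
  bid_nonneg bi /\ forall c : C, c i = ord0 -> 0 < prob w i c -> X c \in Sel bi s c.

Lemma QX_of_Sel X bi s : isSel X bi s -> QX X bi.
Proof. by move=> [bi0 H]; split => // c ci pc; apply: Sel_sub; exact: H. Qed.

Arguments QX_of_Sel {X bi s}.

Lemma QX_cell X bi s : isSel X bi s -> is_cell bnd w B i (QX X).
Proof.
move=> HS; have Qbi := QX_of_Sel HS; case: HS => bi0 HS.
split; first exact: (convex_connected _ _ Qbi (@QX_conv X)).
split.
  split; first by move=> b [].
  by move=> c ci pc; exists (X c) => b [_ H]; exact: H.
move=> S' _ [S'nn S'x] sub; apply/seteqP; split => //.
have Hn : \forall t \near 0^'+, 0 < t /\ forall c,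
    Xopt bnd (prof B i (bi + t *: pivec R s) c) = Sel bi s c.
  near=> t; split; first by near: t; exact: nbhs_right_gt.
  by near: t; exact: (filter_forall _ (fun c => Xopt_near bi s c)).
have [t [t0 Ht]] := filter_ex Hn.
have Qbt : QX X (bi + t *: pivec R s).
  split.
    by move=> k; rewrite !mxE addr_ge0 // mulr_ge0 ?ltW // ?addr_ge0.
  by move=> c ci pc; rewrite Ht; exact: HS.
move=> b Sb; split; first exact: S'nn.
move=> c ci pc; have [x' Hx'] := S'x c ci pc.
have x1 := Hx' _ (sub _ Qbi); have x2 := Hx' _ (sub _ Qbt).
have X1 := Qbi.2 c ci pc; have X2 := Qbt.2 c ci pc.
have e1 := Xopt_welfare X1 x1; have e2 := Xopt_welfare X2 x2.
move: e2; rewrite !welfareE !bidvalD !bidvalZ.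
move: e1; rewrite !welfareE => e1 e2.
have : t * piv s (X c i) = t * piv s (x' i) by rewrite /piv; lra.
move/mulfI => /(_ (lt0r_neq0 t0)) /piv_inj eXx.
by rewrite -(Xopt_same bi b c x' (X c) x1 (Hx' b Sb) eXx).
Unshelve. all: by end_near.
Qed.

Arguments QX_cell {X bi s}.

Lemma bstar_cell_vertex X bi s : isSel X bi s -> is_cell_vertex bnd w B i (bstar X).
Proof.
move=> HS; exists (QX X); split; first exact: (QX_cell HS).
exact: (bstar_vertex _ _ (QX_of_Sel HS)).
Qed.

Section Rank.
Variables (g : 'I_r -> R) (s : {perm 'I_r}).

Definition rlt (j l : 'I_r) : bool := (g j < g l) || ((g j == g l) && (s j < s l)%N).

Lemma rlt_irr j : ~~ rlt j j.
Proof. by rewrite /rlt ltxx eqxx ltnn. Qed.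

Lemma rlt_trans j l k : rlt j l -> rlt l k -> rlt j k.
Proof.
rewrite /rlt => /orP[h1|/andP[/eqP e1 h1]] /orP[h2|/andP[/eqP e2 h2]].
- by rewrite (lt_trans h1 h2).
- by rewrite -e2 h1.
- by rewrite e1 h2.
- by rewrite e1 e2 eqxx (ltn_trans h1 h2) orbT.
Qed.

Lemma rlt_total j l : j != l -> rlt j l || rlt l j.
Proof.
move=> jl; rewrite /rlt; case: (ltgtP (g j) (g l)) => //= e.
rewrite ?e ?eqxx /=.
have : s j != s l by apply: contra jl => /eqP/perm_inj ->.
by rewrite neq_ltn.
Qed.

Definition rank (l : 'I_r) := #|[pred j | rlt j l]|.

Lemma rank_lt l : (rank l < r)%N.
Proof.
have h : (rank l <= #|predC1 l|)%N.
  apply: subset_leq_card; apply/fintype.subsetP => j; rewrite !inE.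
  by apply: contraTneq => ->; exact: rlt_irr.
apply: (leq_ltn_trans h); rewrite cardC1 card_ord.
by case: r l {h} => [[]|k] //.
Qed.

Lemma rank_mono j l : rlt j l -> (rank j < rank l)%N.
Proof.
move=> jl; apply: proper_card; apply/fintype.properP; split.
  by apply/fintype.subsetP => k; rewrite !inE => /rlt_trans; apply.
by exists j; rewrite !inE ?rlt_irr.
Qed.

Lemma rank_inj : injective (fun l => Ordinal (rank_lt l)).
Proof.
move=> j l /(congr1 val) /= e; apply/eqP; apply: contraT => jl.
case/orP: (rlt_total _ _ jl) => /rank_mono; rewrite e ltnn //.
Qed.

Definition sperm : {perm 'I_r} := perm rank_inj.

Lemma piv_sperm k : piv sperm (Some k) = (rank k)%:R + 1.
Proof. by rewrite pivS permE. Qed.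

End Rank.

Lemma prof_nonneg (b : bidt) c : bid_distributions w B -> bid_nonneg b ->
  profile_nonneg (prof B i b c).
Proof.
move=> [_ [_ HB]] b0 j; rewrite /prof; case: ifP => _ //.
Qed.

Lemma prob_ge0 c : bid_distributions w B -> 0 <= prob w i c.
Proof. by move=> [Hw _]; rewrite /prob; apply: prodr_ge0 => j _. Qed.

Lemma lemmaB v X bi s : bid_distributions w B -> nondecreasing_payment bnd p ->
  isSel X bi s -> exists s', U v bi s <= U v (bstar X) s'.
Proof.
move=> Bd ndp HS; have Qbi := QX_of_Sel HS; have Qbs := bstar_in _ _ Qbi.
case: HS => bi0 HS.
set bs := bstar X.
pose g := fun k : 'I_r => bi 0 k - bs 0 k.
have g0 : forall k, 0 <= g k by move=> k; rewrite /g subr_ge0; exact: bstar_lb _ _ Qbi k.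
exists (sperm g s).
have key : forall c : C, c i = ord0 -> 0 < prob w i c -> forall z,
    z \in Xopt bnd (prof B i bs c) ->
    piv (sperm g s) (z i) <= piv (sperm g s) (X c i).
  move=> c ci pc z zO.
  have XS := HS c ci pc; have XO := Sel_sub XS; have XcS := Qbs.2 c ci pc.
  have We := Xopt_welfare XcS zO.
  have /XoptP[fz _] := zO; have /XoptP[_ Hi] := XO; have Hiz := Hi z fz.
  move: We Hiz; rewrite !welfareE => We Hiz.
  have hG : bidval bi (z i) - bidval bs (z i) <= bidval bi (X c i) - bidval bs (X c i).
    lra.
  have hEq : bidval bi (z i) - bidval bs (z i) = bidval bi (X c i) - bidval bs (X c i) ->
      piv s (z i) <= piv s (X c i).
    move=> e; move: XS; rewrite inE => /andP[_ /forallP /(_ z)].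
    rewrite fz /= /lexle !welfareE.
    have -> : bidval bi (z i) + rest c z = bidval bi (X c i) + rest c (X c) by lra.
    by rewrite ltxx eqxx.
  case Ez : (z i) hG hEq => [j|]; last by move=> *; exact: piv_ge0.
  case Ex : (X c i) => [l|] /= hG hEq.
    rewrite !mxE !permE /= lerD2r ler_nat; have [->//|jl] := eqVneq j l.
    apply: ltnW; apply: rank_mono; rewrite /rlt.
    move: hG; rewrite -/(g j) -/(g l) le_eqVlt => /orP[/eqP e|->//].
    have := hEq; rewrite -/(g j) -/(g l) => /(_ e); rewrite !mxE; rewrite lerD2r ler_nat.
    rewrite e eqxx /= leq_eqVlt => /orP[/eqP/val_inj/perm_inj ejl|->]; last by rewrite orbT.
    by rewrite ejl eqxx in jl.
  exfalso; move: hG hEq; rewrite subrr -/(g j) => hG.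
  have e : g j = 0 by apply/eqP; rewrite eq_le hG g0.
  move=> /(_ e); rewrite mxE => h.
  by move: h; rewrite leNgt ltr_wpDl // ltr01.
apply: ler_sum => c /eqP ci.
have := prob_ge0 c Bd; rewrite le_eqVlt => /orP[/eqP <-|pc]; first by rewrite !mul0r.
apply: ler_wpM2l; first exact: ltW.
have XS := HS c ci pc; have XcS := Qbs.2 c ci pc.
have XS' : X c \in Sel bs (sperm g s) c by apply: Sel_intro => // z; exact: key.
have eS : Sel bs (sperm g s) c = Sel bi s c.
  apply/setP => y; rewrite (Sel_eq _ XS') (Sel_eq _ XS).
  have [yx|] := eqVneq (y i) (X c i); last by rewrite !andbF.
  by rewrite !andbT (Xopt_same bs bi c (X c) y XcS (Sel_sub XS) yx).
rewrite /fU eS; apply: ler_wpM2l; first by rewrite invr_ge0.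
apply: ler_sum => y yS; apply: lerB => //.
have yO := Sel_sub yS.
have yO' : y \in Xopt bnd (prof B i bs c).
  by apply: (Sel_sub (s := sperm g s)); rewrite eS.
apply: ndp => //.
- exact: prof_nonneg (bstar_ge0 _ _ Qbi).
- exact: prof_nonneg.
- by move=> j /negbTE ji; rewrite /prof ji.
- by move=> k; rewrite /prof eqxx; exact: bstar_lb _ _ Qbi k.
Qed.

Lemma main : payment_le_bid bnd p -> nondecreasing_payment bnd p ->
  bid_distributions w B -> forall v, valuation v ->
  exists bstar : bidt, is_cell_vertex bnd w B i bstar /\
    forall bi : bidt, bid_nonneg bi ->
      uOPT bnd p w B i v bi <= uOPT bnd p w B i v bstar.
Proof.
move=> _ ndp Bd v _.
pose pickX (bi : bidt) s : {ffun C -> al} := [ffun c => xchoose (Sel_nonempty bi s c)].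
have pickS : forall bi s, bid_nonneg bi -> isSel (pickX bi s) bi s.
  move=> bi s bi0; split => // c _ _; rewrite ffunE; exact: xchooseP.
pose P := fun X : {ffun C -> al} => `[< exists bi s, isSel X bi s >].
have P0 : P (pickX 0 1%g).
  by apply/asboolP; exists 0, 1%g; apply: pickS => k; rewrite mxE.
case: (@arg_maxP _ _ _ (pickX 0 1%g) P (fun X => uOPT bnd p w B i v (bstar X)) P0).
move=> Xm PXm Hm.
exists (bstar Xm); split.
  by move/asboolP: PXm => [bi [s HS]]; exact: bstar_cell_vertex _ _ _ HS.
move=> bi bi0.
have Hs : forall s, ulim bnd p w B i v bi s <= uOPT bnd p w B i v (bstar Xm).
  move=> s; rewrite ulimE.
  have [s' Hs'] := lemmaB v _ _ _ Bd ndp (pickS bi s bi0).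
  apply: (le_trans Hs'); rewrite -ulimE.
  apply: (le_trans _ (Hm (pickX bi s) _)).
    by rewrite /uOPT; exact: le_bigmax.
  by apply/asboolP; exists bi, s; exact: pickS.
by rewrite /uOPT; apply: bigmax_le => // s _; exact: Hs.
Qed.

End Pf.

Theorem lemma4 (R : realType) (M : finType) (n r m : nat)
  (bnd : 'I_n -> 'I_r -> {set M})
  (p : 'I_n -> profile R n r -> alloc n r -> R)
  (w : 'I_n -> 'I_m.+1 -> R) (B : 'I_n -> 'I_m.+1 -> bid R r) :
  payment_le_bid bnd p ->
  nondecreasing_payment bnd p ->
  bid_distributions w B ->
  forall (i : 'I_n) (v : {set M} -> R), valuation v ->
  exists bstar : bid R r,
    is_cell_vertex bnd w B i bstar /\
    forall bi : bid R r, bid_nonneg bi ->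
      uOPT bnd p w B i v bi <= uOPT bnd p w B i v bstar.
Proof.
move=> H1 H2 H3 i v vv.
exact: (@main R M n r m bnd p w B i H1 H2 H3 v vv).
Qed.
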